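(* Suppose that the set $\mathbb{X}_f\subseteq\mathbb{X}$ satisfies the terminal set assumption below, that $\overline{\Delta}\ge M$, and that there exist matrices $X=X^\top\succ 0$ in $\mathbb{R}^{n\times n}$ and $Y\in\mathbb{R}^{m\times n}$ such that for all $p\in\{1,\dots,P+1\}$ $$\begin{bmatrix} X & 0 & 0 & A_{pM}X+B_{pM}Y \\ 0 & \tilde Q_{pM} & \tilde S_{pM} & X \\ 0 & \tilde S_{pM}^\top & \tilde R_{pM} & Y \\ (A_{pM}X+B_{pM}Y)^\top & X & Y^\top & X\end{bmatrix}\succeq 0 .$$ Set $P_f:=X^{-1}$ and $K_f:=YX^{-1}$. Then: (i) $\kappa_f(\Xi_f)\subseteq \Pi$; (ii) $f^{\kappa_f}_p(\Xi_f)\subseteq \Xi_f$ for all $p\in\{1,\dots,P+1\}$; (iii) for all $\xi=(x,w,\beta)\in\Xi_f$ and all $j\in\{1,\dots,M-1\}$, $f(\xi,(K_fx,j),1)\in\Xi$; and for all $\xi\in\Xi_f$, all $p\in\{1,\dots,P\}$, all $j\in\{1,\dots,M-1\}$ and any $v$, $f(f^{\kappa_f}_p(\xi),(v,j),0)\in\Xi$; (iv) for all $p\in\{1,\dots,P+1\}$ and all $\xi\in\Xi_f$, $$V_f(f^{\kappa_f}_p(\xi))-V_f(\xi)\le -\lambda(\xi,\kappa_f(\xi),1)-\sum_{i=1}^{p-1}\lambda\big(f^{\kappa_f}_i(\xi),\kappa_f(\xi),0\big).$$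
   Context: Plant: $x(t+1)=Ax(t)+Bu(t)$, $A\in\mathbb{R}^{n\times n}$, $B\in\mathbb{R}^{n\times m}$, with state constraint set $\mathbb{X}\subseteq\mathbb{R}^n$ and input constraint set $\mathbb{U}\subseteq\mathbb{R}^m$, both closed and containing the origin; cost matrices $Q\succ0$, $R\succ 0$. Token bucket parameters: integers $g\ge1$, $c\ge g$, $b\ge c$; $M:=\lceil c/g\rceil$. $P\in\mathbb{N}_0$ is the maximal number of consecutive packet losses; $\overline{\Delta}\in\mathbb{N}$ is the maximal sampling interval. Overall state $\xi=(x,w,\beta)\in\mathbb{R}^n\times\mathbb{R}^m\times\mathbb{Z}$, overall input $\pi=(v,\Delta)\in\mathbb{R}^m\times\mathbb{N}$, packet-loss variable $\sigma\in\{0,1\}$. Constraint sets: $\Xi:=\mathbb{X}\times\mathbb{U}\times\{0,1,\dots,b\}$, $\Pi:=\mathbb{U}\times\{1,\dots,\overline{\Delta}\}$. For $j\in\mathbb{N}_0$: $A_j:=A^j$, $B_j:=\sum_{i=0}^{j-1}A^iB$ (so $B_0=0$). Transition map: $f(\xi,(v,j),\sigma):=\big(A_jx+(1-\sigma)B_jw+\sigma B_jv,\ (1-\sigma)w+\sigma v,\ \min\{\beta+jg-c,b\}\big)$. Stage cost $\ell(\xi,\pi,\sigma):=x^\top Qx+(1-\sigma)w^\top Rw+\sigma v^\top Rv$, and interval cost $\lambda(\xi,\pi,\sigma):=\ell(\xi,\pi,\sigma)+\sum_{j=1}^{\Delta-1}\ell(f(\xi,(v,j),\sigma),\pi,\sigma)$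 for $\pi=(v,\Delta)$. For $i\in\mathbb{N}$: $Q_i:=\sum_{j=0}^{i-1}A_j^\top QA_j$, $S_i:=\sum_{j=1}^{i-1}A_j^\top QB_j$, $R_i:=iR+\sum_{j=1}^{i-1}B_j^\top QB_j$, and $\begin{bmatrix}\tilde Q_i&\tilde S_i\\ \tilde S_i^\top&\tilde R_i\end{bmatrix}:=\begin{bmatrix}Q_i&S_i\\ S_i^\top&R_i\end{bmatrix}^{-1}$. Terminal ingredients: for a gain $K_f\in\mathbb{R}^{m\times n}$, $\kappa_f(\xi):=(K_fx,M)$; $\Xi_f:=\mathbb{X}_f\times\mathbb{U}\times\{c-g,\dots,b\}$; $V_f(\xi):=x^\top P_fx$ with $P_f\succ0$. Iterates: $f^{\kappa_f}_1(\xi):=f(\xi,\kappa_f(\xi),1)$ and $f^{\kappa_f}_p(\xi):=f(f^{\kappa_f}_{p-1}(\xi),(v,M),0)$ for $p\in\{2,\dots,P+1\}$ (the value of $v$ is irrelevant since $\sigma=0$). Terminal set assumption: $\mathbb{X}_f\subseteq\mathbb{X}$ is closed, contains the origin, $K_f\mathbb{X}_f\subseteq\mathbb{U}$, $(A_{pM}+B_{pM}K_f)\mathbb{X}_f\subseteq\mathbb{X}_f$ for all $p\in\{1,\dots,P+1\}$, and $(A_{pM+j}+B_{pM+j}K_f)\mathbb{X}_f\subseteq\mathbb{X}$ for all $j\in\{1,\dots,M-1\}$ and all $p\in\{0,\dots,P\}$ (here $K_f=YX^{-1}$). *)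

(* Defs.v *)
From HB Require Import structures.
From mathcomp Require Import all_boot all_order all_algebra.
From mathcomp Require Import all_classical all_reals all_analysis.
Set Implicit Arguments. Unset Strict Implicit. Unset Printing Implicit Defensive.
Import Order.TTheory GRing.Theory Num.Theory.
Import numFieldNormedType.Exports.
Local Open Scope ring_scope.
Local Open Scope classical_set_scope.

Definition tb_psd (R : realFieldType) (k : nat) (Mx : 'M[R]_k) : Prop :=
  Mx^T = Mx /\ forall v : 'cV[R]_k, 0 <= (v^T *m Mx *m v) 0 0.

Definition tb_pd (R : realFieldType) (k : nat) (Mx : 'M[R]_k) : Prop :=
  Mx^T = Mx /\ forall v : 'cV[R]_k, v != 0 -> 0 < (v^T *m Mx *m v) 0 0.

Definition tb_Apow (R : realFieldType) (n : nat) (A : 'M[R]_n) (j : nat) : 'M[R]_n :=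
  iter j (mulmx A) 1%:M.

Definition tb_Bsum (R : realFieldType) (n m : nat) (A : 'M[R]_n) (B : 'M[R]_(n, m))
  (j : nat) : 'M[R]_(n, m) :=
  \sum_(i < j) (tb_Apow A i *m B).

Definition tb_Qi (R : realFieldType) (n : nat) (A Q : 'M[R]_n) (i : nat) : 'M[R]_n :=
  \sum_(j < i) ((tb_Apow A j)^T *m Q *m tb_Apow A j).

Definition tb_Si (R : realFieldType) (n m : nat) (A Q : 'M[R]_n) (B : 'M[R]_(n, m))
  (i : nat) : 'M[R]_(n, m) :=
  \sum_(1 <= j < i) ((tb_Apow A j)^T *m Q *m tb_Bsum A B j).

Definition tb_Ri (R : realFieldType) (n m : nat) (A Q : 'M[R]_n) (B : 'M[R]_(n, m))
  (Rc : 'M[R]_m) (i : nat) : 'M[R]_m :=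
  i%:R *: Rc + \sum_(1 <= j < i) ((tb_Bsum A B j)^T *m Q *m tb_Bsum A B j).

Definition tb_tildeInv (R : realFieldType) (n m : nat) (A Q : 'M[R]_n)
  (B : 'M[R]_(n, m)) (Rc : 'M[R]_m) (i : nat) : 'M[R]_(n + m) :=
  invmx (block_mx (tb_Qi A Q i) (tb_Si A Q B i) (tb_Si A Q B i)^T (tb_Ri A Q B Rc i)).

Definition tb_Qt (R : realFieldType) (n m : nat) (A Q : 'M[R]_n) (B : 'M[R]_(n, m))
  (Rc : 'M[R]_m) (i : nat) : 'M[R]_n := ulsubmx (tb_tildeInv A Q B Rc i).
Definition tb_St (R : realFieldType) (n m : nat) (A Q : 'M[R]_n) (B : 'M[R]_(n, m))
  (Rc : 'M[R]_m) (i : nat) : 'M[R]_(n, m) := ursubmx (tb_tildeInv A Q B Rc i).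
Definition tb_Rt (R : realFieldType) (n m : nat) (A Q : 'M[R]_n) (B : 'M[R]_(n, m))
  (Rc : 'M[R]_m) (i : nat) : 'M[R]_m := drsubmx (tb_tildeInv A Q B Rc i).

(* The tb_LMI matrix, block sizes n, n, m, n:
   [ X            0      0      Z ]
   [ 0            Q~     S~     X ]
   [ 0            S~^T   R~     Y ]
   [ Z^T          X      Y^T    X ]    with Z = A_i X + B_i Y, i = pM. *)
Definition tb_LMI (R : realFieldType) (n m : nat) (A Q : 'M[R]_n) (B : 'M[R]_(n, m))
  (Rc : 'M[R]_m) (X : 'M[R]_n) (Y : 'M[R]_(m, n)) (i : nat)
  : 'M[R]_((n + (n + m)) + n) :=
  let Z := tb_Apow A i *m X + tb_Bsum A B i *m Y in
  block_mx
    (block_mx X 0 0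
       (block_mx (tb_Qt A Q B Rc i) (tb_St A Q B Rc i) (tb_St A Q B Rc i)^T (tb_Rt A Q B Rc i)))
    (col_mx Z (col_mx X Y))
    (row_mx Z^T (row_mx X Y^T))
    X.

(* M := ceil(c / g) (for g >= 1) *)
Definition tb_Mceil (g c : nat) : nat := (c + g - 1) %/ g.

Definition tb_ostate (R : realFieldType) (n m : nat) := ('cV[R]_n * 'cV[R]_m * int)%type.

(* transition map f(xi, (v, j), sigma), sigma : bool encodes {0,1} (true = 1) *)
Definition tb_ftrans (R : realFieldType) (n m : nat) (A : 'M[R]_n) (B : 'M[R]_(n, m))
  (g c b : nat) (xi : tb_ostate R n m) (v : 'cV[R]_m) (j : nat) (sigma : bool)
  : tb_ostate R n m :=
  let: (x, w, beta) := xi in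
  (tb_Apow A j *m x + (if sigma then tb_Bsum A B j *m v else tb_Bsum A B j *m w),
   (if sigma then v else w),
   Num.min (beta + (j * g)%:Z - c%:Z) b%:Z).

Definition tb_stage (R : realFieldType) (n m : nat) (Q : 'M[R]_n) (Rc : 'M[R]_m)
  (xi : tb_ostate R n m) (v : 'cV[R]_m) (sigma : bool) : R :=
  let: (x, w, _) := xi in
  (x^T *m Q *m x) 0 0 + (if sigma then (v^T *m Rc *m v) 0 0 else (w^T *m Rc *m w) 0 0).

Definition tb_lam (R : realFieldType) (n m : nat) (A Q : 'M[R]_n) (B : 'M[R]_(n, m))
  (Rc : 'M[R]_m) (g c b : nat) (xi : tb_ostate R n m) (v : 'cV[R]_m) (Delta : nat)
  (sigma : bool) : R :=
  tb_stage Q Rc xi v sigma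
  + \sum_(1 <= j < Delta) tb_stage Q Rc (tb_ftrans A B g c b xi v j sigma) v sigma.

(* iterates f^{kappa_f}_p; the value of v is irrelevant for sigma = 0, we use 0.
   tb_fk 0 xi := xi (only used as a convention). *)
Fixpoint tb_fk (R : realFieldType) (n m : nat) (A : 'M[R]_n) (B : 'M[R]_(n, m))
  (g c b : nat) (Kf : 'M[R]_(m, n)) (p : nat) (xi : tb_ostate R n m) : tb_ostate R n m :=
  match p with
  | 0 => xi
  | 1 => tb_ftrans A B g c b xi (Kf *m xi.1.1) (tb_Mceil g c) true
  | p'.+1 => tb_ftrans A B g c b (tb_fk A B g c b Kf p' xi) 0 (tb_Mceil g c) false
  end.

Definition tb_Xi_set (R : realFieldType) (n m : nat) (Xs : set 'cV[R]_n)
  (Us : set 'cV[R]_m) (b : nat) : set (tb_ostate R n m) :=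
  [set xi | Xs xi.1.1 /\ Us xi.1.2 /\ (0 <= xi.2 <= b%:Z)].

Definition tb_Xif_set (R : realFieldType) (n m : nat) (Xfs : set 'cV[R]_n)
  (Us : set 'cV[R]_m) (g c b : nat) : set (tb_ostate R n m) :=
  [set xi | Xfs xi.1.1 /\ Us xi.1.2 /\ (c%:Z - g%:Z <= xi.2 <= b%:Z)].

Definition tb_Pi_set (R : realFieldType) (m : nat) (Us : set 'cV[R]_m) (Dbar : nat)
  : set ('cV[R]_m * nat) :=
  [set pi | Us pi.1 /\ (1 <= pi.2 <= Dbar)%N].

Definition tb_kappaf (R : realFieldType) (n m : nat) (Kf : 'M[R]_(m, n)) (g c : nat)
  (xi : tb_ostate R n m) : 'cV[R]_m * nat := (Kf *m xi.1.1, tb_Mceil g c).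

Definition tb_Vf (R : realFieldType) (n m : nat) (Pf : 'M[R]_n) (xi : tb_ostate R n m) : R :=
  (xi.1.1^T *m Pf *m xi.1.1) 0 0.

(* Main.v *)
Require Import Defs.
From HB Require Import structures.
From mathcomp Require Import all_boot all_order all_algebra.
From mathcomp Require Import all_classical all_reals all_analysis.
From mathcomp Require Import zify ring lra.
Import Order.TTheory GRing.Theory Num.Theory.
Import numFieldNormedType.Exports.
Set Implicit Arguments. Unset Strict Implicit. Unset Printing Implicit Defensive.
Local Open Scope ring_scope.

Definition bf (R : realFieldType) (k l : nat) (M : 'M[R]_(k, l)) (u : 'cV[R]_k) (v : 'cV[R]_l) : R :=
  (u^T *m M *m v) 0 0.

Lemma bfDl (R : realFieldType) k l (M : 'M[R]_(k, l)) u1 u2 v :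
  bf M (u1 + u2) v = bf M u1 v + bf M u2 v.
Proof. by rewrite /bf linearD /= !mulmxDl mxE. Qed.

Lemma bfDr (R : realFieldType) k l (M : 'M[R]_(k, l)) u v1 v2 :
  bf M u (v1 + v2) = bf M u v1 + bf M u v2.
Proof. by rewrite /bf !mulmxDr mxE. Qed.

Lemma bfNl (R : realFieldType) k l (M : 'M[R]_(k, l)) u v :
  bf M (- u) v = - bf M u v.
Proof. by rewrite /bf linearN /= !mulNmx mxE. Qed.

Lemma bfNr (R : realFieldType) k l (M : 'M[R]_(k, l)) u v :
  bf M u (- v) = - bf M u v.
Proof. by rewrite /bf !mulmxN mxE. Qed.

Lemma bf0l (R : realFieldType) k l (M : 'M[R]_(k, l)) v : bf M 0 v = 0.
Proof. by rewrite /bf trmx0 !mul0mx mxE. Qed.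

Lemma bf0r (R : realFieldType) k l (M : 'M[R]_(k, l)) u : bf M u 0 = 0.
Proof. by rewrite /bf !mulmx0 mxE. Qed.

Lemma bf0M (R : realFieldType) k l (u : 'cV[R]_k) (v : 'cV[R]_l) : bf 0 u v = 0.
Proof. by rewrite /bf mulmx0 mul0mx mxE. Qed.

Lemma bfDM (R : realFieldType) k l (M1 M2 : 'M[R]_(k, l)) u v :
  bf (M1 + M2) u v = bf M1 u v + bf M2 u v.
Proof. by rewrite /bf mulmxDr mulmxDl mxE. Qed.

Lemma bfZM (R : realFieldType) k l (a : R) (M : 'M[R]_(k, l)) u v :
  bf (a *: M) u v = a * bf M u v.
Proof. by rewrite /bf -scalemxAr -scalemxAl mxE. Qed.

Lemma bf_sum (R : realFieldType) k l (I : Type) (r : seq I) (P : pred I)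
  (F : I -> 'M[R]_(k, l)) u v :
  bf (\sum_(i <- r | P i) F i) u v = \sum_(i <- r | P i) bf (F i) u v.
Proof.
elim/big_rec2: _ => [|i y1 y2 _ <-]; first by rewrite bf0M.
by rewrite bfDM.
Qed.

Lemma bf_tr (R : realFieldType) k l (M : 'M[R]_(k, l)) u v :
  bf M^T v u = bf M u v.
Proof.
rewrite /bf.
have -> : v^T *m M^T *m u = (u^T *m M *m v)^T by rewrite !trmx_mul trmxK mulmxA.
by rewrite mxE.
Qed.

Lemma bf_mull (R : realFieldType) k k' l (A : 'M[R]_(k', k)) (M : 'M[R]_(k', l)) u v :
  bf (A^T *m M) u v = bf M (A *m u) v.
Proof. by rewrite /bf trmx_mul !mulmxA. Qed.

Lemma bf_mulr (R : realFieldType) k l l' (M : 'M[R]_(k, l)) (A : 'M[R]_(l, l')) u v :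
  bf (M *m A) u v = bf M u (A *m v).
Proof. by rewrite /bf !mulmxA. Qed.

Lemma bf_col (R : realFieldType) k1 k2 l (M1 : 'M[R]_(k1, l)) (M2 : 'M[R]_(k2, l)) a b z :
  bf (col_mx M1 M2) (col_mx a b) z = bf M1 a z + bf M2 b z.
Proof. by rewrite /bf tr_col_mx mul_row_col mulmxDl mxE. Qed.

Lemma bf_row (R : realFieldType) k l1 l2 (M1 : 'M[R]_(k, l1)) (M2 : 'M[R]_(k, l2)) z a b :
  bf (row_mx M1 M2) z (col_mx a b) = bf M1 z a + bf M2 z b.
Proof. by rewrite /bf mul_mx_row mul_row_col mxE. Qed.

Lemma bf_block (R : realFieldType) k1 k2 (M11 : 'M[R]_(k1, k1)) (M12 : 'M[R]_(k1, k2))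
  (M21 : 'M[R]_(k2, k1)) (M22 : 'M[R]_(k2, k2)) a b :
  bf (block_mx M11 M12 M21 M22) (col_mx a b) (col_mx a b) =
  bf M11 a a + bf M12 a b + bf M21 b a + bf M22 b b.
Proof. by rewrite /block_mx bf_col !bf_row addrA. Qed.

Lemma ApowS (R : realFieldType) n (A : 'M[R]_n) j : tb_Apow A j.+1 = A *m tb_Apow A j.
Proof. by []. Qed.

Lemma Apow0 (R : realFieldType) n (A : 'M[R]_n) : tb_Apow A 0 = 1%:M.
Proof. by []. Qed.

Lemma ApowD (R : realFieldType) n (A : 'M[R]_n) a b :
  tb_Apow A (a + b) = tb_Apow A a *m tb_Apow A b.
Proof.
elim: a => [|a IH]; first by rewrite add0n Apow0 mul1mx.
by rewrite addSn !ApowS IH mulmxA.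
Qed.

Lemma Bsum0 (R : realFieldType) n m (A : 'M[R]_n) (B : 'M[R]_(n, m)) : tb_Bsum A B 0 = 0.
Proof. by rewrite /tb_Bsum big_ord0. Qed.

Lemma BsumD (R : realFieldType) n m (A : 'M[R]_n) (B : 'M[R]_(n, m)) a b :
  tb_Bsum A B (a + b) = tb_Bsum A B a + tb_Apow A a *m tb_Bsum A B b.
Proof.
rewrite /tb_Bsum big_split_ord /= mulmx_sumr; congr (_ + _).
by apply: eq_bigr => i _; rewrite ApowD mulmxA.
Qed.

Lemma traj_step (R : realFieldType) n m (A : 'M[R]_n) (B : 'M[R]_(n, m)) a b (x : 'cV[R]_n) (u : 'cV[R]_m) :
  tb_Apow A a *m (tb_Apow A b *m x + tb_Bsum A B b *m u) + tb_Bsum A B a *m u =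
  tb_Apow A (a + b) *m x + tb_Bsum A B (a + b) *m u.
Proof.
rewrite ApowD BsumD mulmxDr !mulmxA mulmxDl -!addrA; congr (_ + _).
by rewrite addrC.
Qed.

Lemma ftrans_x (R : realFieldType) n m (A : 'M[R]_n) (B : 'M[R]_(n, m)) g c b xi v j s :
  (tb_ftrans A B g c b xi v j s).1.1 =
  tb_Apow A j *m xi.1.1 + tb_Bsum A B j *m (if s then v else xi.1.2).
Proof. by case: xi => [[x w] be]; case: s. Qed.

Lemma ftrans_w (R : realFieldType) n m (A : 'M[R]_n) (B : 'M[R]_(n, m)) g c b xi v j s :
  (tb_ftrans A B g c b xi v j s).1.2 = (if s then v else xi.1.2).
Proof. by case: xi => [[x w] be]; case: s. Qed.

Lemma ftrans_b (R : realFieldType) n m (A : 'M[R]_n) (B : 'M[R]_(n, m)) g c b xi v j s :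
  (tb_ftrans A B g c b xi v j s).2 = Num.min (xi.2 + (j * g)%:Z - c%:Z) b%:Z.
Proof. by case: xi => [[x w] be]. Qed.

Lemma fk_S (R : realFieldType) n m (A : 'M[R]_n) (B : 'M[R]_(n, m)) g c b Kf p xi :
  (1 <= p)%N ->
  tb_fk A B g c b Kf p.+1 xi = tb_ftrans A B g c b (tb_fk A B g c b Kf p xi) 0 (tb_Mceil g c) false.
Proof. by case: p. Qed.

Lemma fk_traj (R : realFieldType) n m (A : 'M[R]_n) (B : 'M[R]_(n, m)) g c b Kf p xi :
  (1 <= p)%N ->
  (tb_fk A B g c b Kf p xi).1.1 =
     tb_Apow A (p * tb_Mceil g c) *m xi.1.1 + tb_Bsum A B (p * tb_Mceil g c) *m (Kf *m xi.1.1)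
  /\ (tb_fk A B g c b Kf p xi).1.2 = Kf *m xi.1.1.
Proof.
elim: p => [//|p IH] _.
case: (posnP p) => [->|pp].
  by rewrite mul1n /= ftrans_x ftrans_w.
rewrite fk_S // ftrans_x ftrans_w /=.
have [-> ->] := IH pp; split => //.
by rewrite traj_step mulSn.
Qed.

Lemma Mceil_ge g c : (1 <= g)%N -> (c <= tb_Mceil g c * g)%N.
Proof. rewrite /tb_Mceil => g1. lia. Qed.

Lemma Mceil_pos g c : (1 <= g)%N -> (g <= c)%N -> (1 <= tb_Mceil g c)%N.
Proof. rewrite /tb_Mceil => g1 gc. lia. Qed.

Lemma fk_beta (R : realFieldType) n m (A : 'M[R]_n) (B : 'M[R]_(n, m)) g c b Kf p xi :
  (1 <= g)%N -> (g <= c)%N -> (c <= b)%N ->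
  c%:Z - g%:Z <= xi.2 <= b%:Z -> (1 <= p)%N ->
  c%:Z - g%:Z <= (tb_fk A B g c b Kf p xi).2 <= b%:Z.
Proof.
move=> g1 gc cb Hxi.
have key : forall y : tb_ostate R n m, forall v s, c%:Z - g%:Z <= y.2 <= b%:Z ->
   c%:Z - g%:Z <= (tb_ftrans A B g c b y v (tb_Mceil g c) s).2 <= b%:Z.
  move=> y v s /andP [h1 h2]; rewrite ftrans_b.
  have hM := Mceil_ge c g1.
  apply/andP; split.
    rewrite le_min; apply/andP; split; last by lia.
    have : (c <= tb_Mceil g c * g)%N := hM. lia.
  by rewrite ge_min lexx orbT.
elim: p => [//|p IH] _.
case: (posnP p) => [->|pp]; first by apply: key.
by rewrite fk_S //; apply: key; apply: IH.
Qed.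

Definition cst (R : realFieldType) n m (A Q : 'M[R]_n) (B : 'M[R]_(n, m)) (Rc : 'M[R]_m)
  (x : 'cV[R]_n) (u : 'cV[R]_m) (k : nat) : R :=
  bf Q (tb_Apow A k *m x + tb_Bsum A B k *m u) (tb_Apow A k *m x + tb_Bsum A B k *m u)
  + bf Rc u u.

Lemma stage_cst (R : realFieldType) n m (A Q : 'M[R]_n) (B : 'M[R]_(n, m)) (Rc : 'M[R]_m)
  (xi : tb_ostate R n m) v s :
  tb_stage Q Rc xi v s = cst A Q B Rc xi.1.1 (if s then v else xi.1.2) 0.
Proof.
rewrite /cst Apow0 Bsum0 mul1mx mul0mx addr0.
by case: xi => [[x w] be]; case: s.
Qed.

Lemma lam_cst (R : realFieldType) n m (A Q : 'M[R]_n) (B : 'M[R]_(n, m)) (Rc : 'M[R]_m)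
  g c b (xi : tb_ostate R n m) v D s : (1 <= D)%N ->
  tb_lam A Q B Rc g c b xi v D s =
  \sum_(0 <= k < D) cst A Q B Rc xi.1.1 (if s then v else xi.1.2) k.
Proof.
move=> D1; rewrite /tb_lam (big_ltn D1) (stage_cst A Q B Rc); congr (_ + _).
apply: eq_bigr => k _; rewrite (stage_cst A Q B Rc) ftrans_x ftrans_w /cst Apow0 Bsum0 mul1mx mul0mx addr0.
by case: s.
Qed.

Lemma cst_shift (R : realFieldType) n m (A Q : 'M[R]_n) (B : 'M[R]_(n, m)) (Rc : 'M[R]_m)
  (x : 'cV[R]_n) (u : 'cV[R]_m) a k :
  cst A Q B Rc (tb_Apow A a *m x + tb_Bsum A B a *m u) u k = cst A Q B Rc x u (k + a).
Proof. by rewrite /cst traj_step. Qed.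

Lemma sum_blocks (R : realFieldType) (F : nat -> R) M p : (1 <= p)%N ->
  \sum_(0 <= k < M) F k + \sum_(1 <= i < p) \sum_(0 <= k < M) F (k + i * M)%N =
  \sum_(0 <= k < p * M) F k.
Proof.
elim: p => [//|p IH] _.
case: (posnP p) => [->|pp]; first by rewrite [X in _ + X]big_geq // addr0 mul1n.
rewrite big_nat_recr //= addrA IH // [RHS](big_cat_nat _ (n := p * M)) //=; last by rewrite mulSn leq_addl.
congr (_ + _).
rewrite [in RHS](_ : (p * M = 0 + p * M)%N) // big_addn mulSn addnK.
by [].
Qed.

Lemma total_cost (R : realFieldType) n m (A Q : 'M[R]_n) (B : 'M[R]_(n, m)) (Rc : 'M[R]_m)
  g c b Kf p (xi : tb_ostate R n m) : (1 <= p)%N -> (1 <= tb_Mceil g c)%N ->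
  tb_lam A Q B Rc g c b xi (Kf *m xi.1.1) (tb_Mceil g c) true +
  \sum_(1 <= i < p) tb_lam A Q B Rc g c b (tb_fk A B g c b Kf i xi) (Kf *m xi.1.1) (tb_Mceil g c) false
  = \sum_(0 <= k < p * tb_Mceil g c) cst A Q B Rc xi.1.1 (Kf *m xi.1.1) k.
Proof.
move=> p1 M1; rewrite -sum_blocks // lam_cst //; congr (_ + _).
apply: eq_big_nat => i /andP [i1 _].
rewrite lam_cst //; have [-> ->] := @fk_traj _ _ _ A B g c b Kf i xi i1.
by apply: eq_bigr => k _; rewrite cst_shift.
Qed.

Lemma costH (R : realFieldType) n m (A Q : 'M[R]_n) (B : 'M[R]_(n, m)) (Rc : 'M[R]_m)
  (x : 'cV[R]_n) (u : 'cV[R]_m) N : (1 <= N)%N -> Q^T = Q ->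
  \sum_(0 <= k < N) cst A Q B Rc x u k =
  bf (block_mx (tb_Qi A Q N) (tb_Si A Q B N) (tb_Si A Q B N)^T (tb_Ri A Q B Rc N))
     (col_mx x u) (col_mx x u).
Proof.
move=> N1 QT.
rewrite bf_block bf_tr /tb_Qi /tb_Si /tb_Ri bfDM bfZM !bf_sum.
have cross : forall a b, bf Q b a = bf Q a b by move=> a b0; rewrite -bf_tr QT.
rewrite /cst big_split /= sumr_const_nat subn0 mulr_natl.
under eq_bigr do rewrite bfDl !bfDr (cross (tb_Apow A _ *m x)).
rewrite !big_split /=.
rewrite -(big_mkord xpredT (fun i => bf ((tb_Apow A i)^T *m Q *m tb_Apow A i) x x)).
have E1 : forall i, bf ((tb_Apow A i)^T *m Q *m tb_Apow A i) x x =
   bf Q (tb_Apow A i *m x) (tb_Apow A i *m x) by move=> i; rewrite bf_mulr bf_mull.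
have E2 : forall i, bf ((tb_Apow A i)^T *m Q *m tb_Bsum A B i) x u =
   bf Q (tb_Apow A i *m x) (tb_Bsum A B i *m u) by move=> i; rewrite bf_mulr bf_mull.
have E3 : forall i, bf ((tb_Bsum A B i)^T *m Q *m tb_Bsum A B i) u u =
   bf Q (tb_Bsum A B i *m u) (tb_Bsum A B i *m u) by move=> i; rewrite bf_mulr bf_mull.
rewrite (eq_bigr _ (fun i _ => E1 i)) (eq_bigr _ (fun i _ => E2 i)) (eq_bigr _ (fun i _ => E3 i)).
rewrite [X in _ + X + _ + _ = _](big_ltn N1) [X in _ + (X + _) + _ = _](big_ltn N1).
rewrite [X in _ + (_ + X) + _ = _](big_ltn N1).
rewrite /= Bsum0 mul0mx ?bf0r ?bf0l !add0r.
lra.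
Qed.

Lemma pd_psd (R : realFieldType) k (M : 'M[R]_k) : tb_pd M -> forall v, 0 <= bf M v v.
Proof.
move=> [_ H] v; case: (eqVneq v 0) => [->|nz]; first by rewrite bf0l.
exact: ltW (H v nz).
Qed.

Lemma pd_unit (R : realFieldType) k (M : 'M[R]_k) :
  (forall v : 'cV[R]_k, v != 0 -> 0 < bf M v v) -> M \in unitmx.
Proof.
move=> H; rewrite unitmxE unitfE; apply/negP => /det0P [v nz vM0].
have : v^T != 0 by apply: contra nz => /eqP; rewrite -trmx0 => /trmx_inj ->.
move/H; rewrite /bf trmxK vM0 mul0mx mxE ltxx //.
Qed.

Lemma H_unit (R : realFieldType) n m (A Q : 'M[R]_n) (B : 'M[R]_(n, m)) (Rc : 'M[R]_m) N :
  (1 <= N)%N -> tb_pd Q -> tb_pd Rc ->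
  block_mx (tb_Qi A Q N) (tb_Si A Q B N) (tb_Si A Q B N)^T (tb_Ri A Q B Rc N) \in unitmx.
Proof.
move=> N1 pQ pR; apply: pd_unit => y nz.
rewrite -(vsubmxK y) -costH //; last by case: pQ.
rewrite (big_ltn N1).
have ge : forall k, 0 <= cst A Q B Rc (usubmx y) (dsubmx y) k.
  by move=> k; rewrite /cst addr_ge0 // pd_psd.
rewrite ltr_wpDr ?sumr_ge0 // /cst Apow0 Bsum0 mul1mx mul0mx addr0.
case: (eqVneq (usubmx y) 0) => [u0|unz].
  have dnz : dsubmx y != 0.
    by apply: contra nz => /eqP d0; rewrite -(vsubmxK y) u0 d0 col_mx0.
  by rewrite u0 bf0l add0r; case: pR => _; apply.
by rewrite ltr_wpDr ?pd_psd //; case: pQ => _; apply.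
Qed.

Lemma schur (R : realFieldType) n m (X : 'M[R]_n) (Y : 'M[R]_(m, n)) (Ab : 'M[R]_n)
  (Bb : 'M[R]_(n, m)) (H : 'M[R]_(n + m)) :
  X \in unitmx -> X^T = X -> H \in unitmx ->
  tb_psd (block_mx (block_mx X 0 0 (invmx H))
      (col_mx (Ab *m X + Bb *m Y) (col_mx X Y))
      (row_mx (Ab *m X + Bb *m Y)^T (row_mx X Y^T)) X) ->
  forall x : 'cV[R]_n,
  bf (invmx X) (Ab *m x + Bb *m (Y *m invmx X *m x)) (Ab *m x + Bb *m (Y *m invmx X *m x))
  - bf (invmx X) x x
  + bf H (col_mx x (Y *m invmx X *m x)) (col_mx x (Y *m invmx X *m x)) <= 0.
Proof.
move=> Xu XT Hu [_ psd] x.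
set P := invmx X; set Z := Ab *m X + Bb *m Y.
set z := P *m x; set xp := Ab *m x + Bb *m (Y *m P *m x).
set u0 := col_mx x (Y *m P *m x).
have Zz : Z *m z = xp by rewrite /Z /z /xp mulmxDl -!mulmxA (mulmxA X) mulmxV // mul1mx.
have Wz : col_mx X Y *m z = u0 by rewrite mul_col_mx /z mulmxA mulmxV // mul1mx /u0 mulmxA.
have XP : X *m P = 1%:M by rewrite mulmxV.
have HH : invmx H *m H = 1%:M by rewrite mulVmx.
have := psd (col_mx (col_mx (- (P *m xp)) (- (H *m u0))) z).
rewrite -/(bf _ _ _) bf_block bf_block !bf0M !addr0.
rewrite -/Z bf_col bf_row.
have e7 : row_mx X Y^T = (col_mx X Y)^T by rewrite tr_col_mx XT.
rewrite e7 bf_tr.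
have e1 : bf X (- (P *m xp)) (- (P *m xp)) = bf P xp xp.
  by rewrite bfNl bfNr opprK -bf_mull -bf_mulr -mulmxA XP mulmx1 bf_tr.
have e2 : bf (invmx H) (- (H *m u0)) (- (H *m u0)) = bf H u0 u0.
  by rewrite bfNl bfNr opprK -bf_mull -bf_mulr -mulmxA HH mulmx1 bf_tr.
have e3 : bf Z (- (P *m xp)) z = - bf P xp xp.
  by rewrite bfNl -bf_mull bf_mulr Zz bf_tr.
have e4 : bf (col_mx X Y) (- (H *m u0)) z = - bf H u0 u0.
  by rewrite bfNl -bf_mull bf_mulr Wz bf_tr.
have e5 : bf X z z = bf P x x.
  by rewrite /z -bf_mull -bf_mulr -mulmxA XP mulmx1 bf_tr.
have e6 : bf Z^T z (- (P *m xp)) = - bf P xp xp by rewrite bf_tr e3.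
rewrite e1 e2 e3 e4 e5 e6.
lra.
Qed.

Lemma tr_sum (R : realFieldType) k l (I : Type) (r : seq I) (P : pred I)
  (F : I -> 'M[R]_(k, l)) :
  (\sum_(i <- r | P i) F i)^T = \sum_(i <- r | P i) (F i)^T.
Proof.
elim/big_rec2: _ => [|i y1 y2 _ <-]; first by rewrite trmx0.
by rewrite linearD.
Qed.

Lemma H_sym (R : realFieldType) n m (A Q : 'M[R]_n) (B : 'M[R]_(n, m)) (Rc : 'M[R]_m) N :
  Q^T = Q -> Rc^T = Rc ->
  (block_mx (tb_Qi A Q N) (tb_Si A Q B N) (tb_Si A Q B N)^T (tb_Ri A Q B Rc N))^T =
  block_mx (tb_Qi A Q N) (tb_Si A Q B N) (tb_Si A Q B N)^T (tb_Ri A Q B Rc N).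
Proof.
move=> QT RT; rewrite tr_block_mx trmxK; congr block_mx.
  rewrite /tb_Qi tr_sum; apply: eq_bigr => i _.
  by rewrite !trmx_mul trmxK QT mulmxA.
rewrite /tb_Ri linearD /= linearZ /= RT tr_sum; congr (_ + _).
apply: eq_bigr => i _.
by rewrite !trmx_mul trmxK QT mulmxA.
Qed.

Lemma mid_block (R : realFieldType) n m (Hi : 'M[R]_(n + m)) : Hi^T = Hi ->
  block_mx (ulsubmx Hi) (ursubmx Hi) (ursubmx Hi)^T (drsubmx Hi) = Hi.
Proof. by move=> HT; rewrite trmx_ursub HT submxK. Qed.

Lemma beta_ok (g c b : nat) (be : int) j :
  c%:Z - g%:Z <= be -> (1 <= j)%N ->
  0 <= Num.min (be + (j * g)%:Z - c%:Z) b%:Z <= b%:Z.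
Proof.
move=> h j1; apply/andP; split; last by rewrite ge_min lexx orbT.
rewrite le_min; apply/andP; split; last by lia.
have : (g <= j * g)%N by rewrite leq_pmull.
lia.
Qed.

Lemma lin_rw (R : realFieldType) n m (Ap : 'M[R]_n) (Bs : 'M[R]_(n, m)) (K : 'M[R]_(m, n))
  (x : 'cV[R]_n) : (Ap + Bs *m K) *m x = Ap *m x + Bs *m (K *m x).
Proof. by rewrite mulmxDl mulmxA. Qed.

Unset Implicit Arguments.
Local Open Scope classical_set_scope.

Theorem lemma1 (R : realType) (n m : nat)
  (A : 'M[R]_n) (B : 'M[R]_(n, m)) (Q : 'M[R]_n) (Rc : 'M[R]_m)
  (Xs : set 'cV[R]_n) (Us : set 'cV[R]_m) (Xfs : set 'cV[R]_n)
  (g c b P Dbar : nat) (X : 'M[R]_n) (Y : 'M[R]_(m, n)) :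
  closed Xs -> Xs 0 -> closed Us -> Us 0 ->
  tb_pd Q -> tb_pd Rc ->
  (1 <= g)%N -> (g <= c)%N -> (c <= b)%N ->
  let M := tb_Mceil g c in
  let Kf := Y *m invmx X in
  let Pf := invmx X in
  (* terminal set assumption *)
  Xfs `<=` Xs -> closed Xfs -> Xfs 0 ->
  (forall x, Xfs x -> Us (Kf *m x)) ->
  (forall p, (1 <= p <= P.+1)%N -> forall x, Xfs x ->
     Xfs ((tb_Apow A (p * M) + tb_Bsum A B (p * M) *m Kf) *m x)) ->
  (forall j p, (1 <= j <= M - 1)%N -> (p <= P)%N -> forall x, Xfs x ->
     Xs ((tb_Apow A (p * M + j) + tb_Bsum A B (p * M + j) *m Kf) *m x)) ->
  (M <= Dbar)%N ->
  tb_pd X ->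
  (forall p, (1 <= p <= P.+1)%N -> tb_psd (tb_LMI A Q B Rc X Y (p * M))) ->
  (* (i) *)
  (forall xi, tb_Xif_set Xfs Us g c b xi -> tb_Pi_set Us Dbar (tb_kappaf Kf g c xi))
  /\
  (* (ii) *)
  (forall p, (1 <= p <= P.+1)%N -> forall xi, tb_Xif_set Xfs Us g c b xi ->
     tb_Xif_set Xfs Us g c b (tb_fk A B g c b Kf p xi))
  /\
  (* (iii) *)
  ((forall xi, tb_Xif_set Xfs Us g c b xi -> forall j, (1 <= j <= M - 1)%N ->
      tb_Xi_set Xs Us b (tb_ftrans A B g c b xi (Kf *m xi.1.1) j true))
   /\
   (forall xi, tb_Xif_set Xfs Us g c b xi -> forall p j (v : 'cV[R]_m),
      (1 <= p <= P)%N -> (1 <= j <= M - 1)%N ->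
      tb_Xi_set Xs Us b (tb_ftrans A B g c b (tb_fk A B g c b Kf p xi) v j false)))
  /\
  (* (iv) *)
  (forall p, (1 <= p <= P.+1)%N -> forall xi, tb_Xif_set Xfs Us g c b xi ->
     tb_Vf Pf (tb_fk A B g c b Kf p xi) - tb_Vf Pf xi <=
       - tb_lam A Q B Rc g c b xi (tb_kappaf Kf g c xi).1 (tb_kappaf Kf g c xi).2 true
       - \sum_(1 <= i < p) tb_lam A Q B Rc g c b (tb_fk A B g c b Kf i xi)
                 (tb_kappaf Kf g c xi).1 (tb_kappaf Kf g c xi).2 false).
Proof.
move=> Xc X0 Uc U0 pQ pR g1 gc cb M Kf Pf.
rewrite {}/M {}/Kf {}/Pf.
move=> Xfsub Xfc Xf0 XfU Xfinv XfXs MD pX LMI.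
have M1 := Mceil_pos g1 gc.
have QT : Q^T = Q by case: pQ.
have RT : Rc^T = Rc by case: pR.
have XT : X^T = X by case: pX.
have Xu : X \in unitmx by apply: pd_unit; case: pX.
split.
  move=> xi [hx [hw hb]]; rewrite /tb_Pi_set /tb_kappaf /=; split; first exact: XfU.
  by rewrite M1.
split.
  move=> p /andP [p1 pP] xi [hx [hw hb]].
  have [ex ew] := @fk_traj _ _ _ A B g c b (Y *m invmx X) p xi p1.
  have hb' := @fk_beta _ _ _ A B g c b (Y *m invmx X) p xi g1 gc cb hb p1.
  rewrite /tb_Xif_set /= ex ew; split; last by split => //; apply: XfU.
  have := Xfinv p; rewrite p1 pP => /(_ isT _ hx).
  by rewrite lin_rw.
split.
  split.
    move=> xi [hx [hw hb]] j hj.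
    rewrite /tb_Xi_set /= ftrans_x ftrans_w ftrans_b; split; last split.
    - have := XfXs j 0%N hj (leq0n _) _ hx; rewrite mul0n add0n.
      by rewrite lin_rw.
    - exact: XfU.
    - case/andP: hb => hb1 _; apply: beta_ok => //; by case/andP: hj.
  move=> xi [hx [hw hb]] p j v /andP [p1 pP] hj.
  have [ex ew] := @fk_traj _ _ _ A B g c b (Y *m invmx X) p xi p1.
  have /andP [hb1 _] := @fk_beta _ _ _ A B g c b (Y *m invmx X) p xi g1 gc cb hb p1.
  rewrite /tb_Xi_set /= ftrans_x ftrans_w ftrans_b ew ex; split; last split.
  - rewrite traj_step addnC.
    have := XfXs j p hj pP _ hx.
    by rewrite lin_rw.
  - exact: XfU.
  - apply: beta_ok => //; by case/andP: hj.
move=> p /andP [p1 pP] xi [hx [hw hb]].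
set N := (p * tb_Mceil g c)%N.
have N1 : (1 <= N)%N by rewrite /N muln_gt0 p1 M1.
set H := block_mx (tb_Qi A Q N) (tb_Si A Q B N) (tb_Si A Q B N)^T (tb_Ri A Q B Rc N).
have Hu : H \in unitmx by apply: H_unit.
have HT : H^T = H by apply: H_sym.
have tc := @total_cost _ _ _ A Q B Rc g c b (Y *m invmx X) p xi p1 M1.
rewrite -/N costH // in tc.
have L := LMI p; rewrite p1 pP in L; have := L isT.
rewrite /tb_LMI mid_block; last by rewrite /tb_tildeInv trmx_inv -/N -/H HT.
rewrite /tb_tildeInv -/N -/H => psd.
have sch := schur Xu XT Hu psd xi.1.1.
have [ex _] := @fk_traj _ _ _ A B g c b (Y *m invmx X) p xi p1.
rewrite /tb_Vf ex -/N.
rewrite -/(bf _ _ _) -/(bf _ xi.1.1 xi.1.1) /tb_kappaf /=.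
rewrite !mulmxA in sch tc *.
lra.
Qed.
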